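(* For all $a,b>0$, $G(a,b)\le\lambda_s(a,b)\le L(a,b)$ whenever $-1/2\le s\le 0$. These bounds are best possible: the inequality $G(a,b)\le \lambda_s(a,b)$ holds for all $a,b>0$ if and only if $s\ge -1/2$, and the inequality $\lambda_s(a,b)\le L(a,b)$ holds for all $a,b>0$ if and only if $s\le 0$.
   Context: For $a,b>0$ with $a\neq b$ define $$\lambda_s(a,b)=\begin{cases}\dfrac{s-1}{s+1}\cdot\dfrac{a^{s+1}+b^{s+1}-2\left(\frac{a+b}{2}\right)^{s+1}}{a^s+b^s-2\left(\frac{a+b}{2}\right)^s}, & s\in\mathbb{R}\setminus\{-1,0,1\},\\[3mm] \dfrac{2\log\frac{a+b}{2}-\log a-\log b}{\frac{1}{2a}+\frac{1}{2b}-\frac{2}{a+b}}, & s=-1,\\[3mm] \dfrac{a\log a+b\log b-(a+b)\log\frac{a+b}{2}}{2\log\frac{a+b}{2}-\log a-\log b}, & s=0,\\[3mm] \dfrac{(b-a)^2}{4\left(a\log a+b\log b-(a+b)\log\frac{a+b}{2}\right)}, & s=1,\end{cases}$$ and $\lambda_s(a,a)=a$. The geometric mean is $G(a,b)=\sqrt{ab}$ and the logarithmic mean is $L(a,b)=\frac{b-a}{\log b-\log a}$ for $a\ne b$, $L(a,a)=a$. *)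

(* Defs.v *)
From Stdlib Require Import Reals Lra.
Open Scope R_scope.

Definition Amean (a b : R) : R := (a + b) / 2.

Definition Gmean (a b : R) : R := sqrt (a * b).

Definition Lmean (a b : R) : R :=
  if Req_EM_T a b then a else (b - a) / (ln b - ln a).

Definition lambda (s a b : R) : R :=
  if Req_EM_T a b then a
  else if Req_EM_T s (-1) then
    (2 * ln (Amean a b) - ln a - ln b) /
    (1 / (2 * a) + 1 / (2 * b) - 2 / (a + b))
  else if Req_EM_T s 0 then
    (a * ln a + b * ln b - (a + b) * ln (Amean a b)) /
    (2 * ln (Amean a b) - ln a - ln b)
  else if Req_EM_T s 1 then
    (b - a) ^ 2 / (4 * (a * ln a + b * ln b - (a + b) * ln (Amean a b)))
  else
    (s - 1) / (s + 1) *
    ((Rpower a (s + 1) + Rpower b (s + 1) - 2 * Rpower (Amean a b) (s + 1)) /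
     (Rpower a s + Rpower b s - 2 * Rpower (Amean a b) s)).

(* Main.v *)
Require Import Defs.
From Stdlib Require Import Reals.
From Coquelicot Require Import Coquelicot.
From Stdlib Require Import Lra Psatz.
Open Scope R_scope.

Definition pw (x t : R) := exp (t * ln x).

Lemma pw_pos x t : 0 < pw x t.
Proof. apply exp_pos. Qed.

Lemma pw_add x t u : pw x (t + u) = pw x t * pw x u.
Proof. unfold pw. rewrite <- exp_plus. f_equal. ring. Qed.

Lemma pw_1 x : 0 < x -> pw x 1 = x.
Proof. intros. unfold pw. rewrite Rmult_1_l. apply exp_ln; auto. Qed.

Lemma pw_0 x : pw x 0 = 1.
Proof. unfold pw. rewrite Rmult_0_l. apply exp_0. Qed.

Lemma pw_mul x y t : 0 < x -> 0 < y -> pw (x * y) t = pw x t * pw y t.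
Proof. intros. unfold pw. rewrite ln_mult; auto. rewrite <- exp_plus. f_equal. ring. Qed.

Lemma pw_p1 x t : 0 < x -> pw x (t + 1) = pw x t * x.
Proof. intros. rewrite pw_add, pw_1; auto. Qed.

Lemma pw_p2 x t : 0 < x -> pw x (t + 2) = pw x t * (x * x).
Proof. intros. replace (t+2) with ((t+1)+1) by ring. rewrite !pw_p1; auto. ring. Qed.

Lemma pw_le_base x y t : 0 < x -> x <= y -> 0 <= t -> pw x t <= pw y t.
Proof. intros. unfold pw. destruct (Req_dec x y). subst; lra.
  destruct H1. apply Rlt_le, exp_increasing.
  assert (ln x < ln y) by (apply ln_increasing; lra). nra.
  subst. rewrite !Rmult_0_l. lra. Qed.

Lemma pw_le_base_neg x y t : 0 < x -> x <= y -> t <= 0 -> pw y t <= pw x t.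
Proof. intros. unfold pw. destruct (Req_dec x y). subst; lra.
  destruct H1. apply Rlt_le, exp_increasing.
  assert (ln x < ln y) by (apply ln_increasing; lra). nra.
  subst. rewrite !Rmult_0_l. lra. Qed.

Ltac toR := match goal with |- ?a = ?b => change (@eq R a b) end.

Definition Jc (al be u v t : R) : R :=
  if Req_EM_T t (-1) then al * (v - u) + be * (ln v - ln u)
  else if Req_EM_T t (-2) then al * (ln v - ln u) - be * (/ v - / u)
  else al * (pw v (t+2) - pw u (t+2)) / (t+2) + be * (pw v (t+1) - pw u (t+1)) / (t+1).

Lemma cont_int al be t x : 0 < x -> continuous (fun y => (al * y + be) * pw y t) x.
Proof. intros. apply (ex_derive_continuous (fun y => (al * y + be) * pw y t)). unfold pw. auto_derive. auto. Qed.

Lemma JcP al be u v t : 0 < u -> u <= v ->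
  is_RInt (fun x => (al * x + be) * pw x t) u v (Jc al be u v t).
Proof.
  intros Hu Huv. unfold Jc.
  assert (Hm : forall x, Rmin u v <= x <= Rmax u v -> 0 < x).
  { intros x Hx. rewrite Rmin_left in Hx; lra. }
  destruct (Req_EM_T t (-1)) as [E1|N1].
  - subst t.
    apply (is_RInt_ext (fun x => al + be * / x)).
    { intros x Hx. toR. assert (0 < x) by (apply Hm; lra).
      unfold pw. replace (-1 * ln x) with (- ln x) by ring.
      rewrite exp_Ropp, exp_ln by auto. field; lra. }
    replace (al * (v - u) + be * (ln v - ln u)) with (minus (al * v + be * ln v) (al * u + be * ln u))
      by (unfold minus, plus, opp; simpl; ring).
    apply (is_RInt_derive (fun x => al * x + be * ln x)).
    + intros x Hx. specialize (Hm x Hx). auto_derive. lra. field; lra.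
    + intros x Hx. specialize (Hm x Hx). apply (ex_derive_continuous (V:=R_NormedModule)). auto_derive. lra.
  - destruct (Req_EM_T t (-2)) as [E2|N2].
    + subst t.
      apply (is_RInt_ext (fun x => al * / x + be * / (x * x))).
      { intros x Hx. toR. assert (0 < x) by (apply Hm; lra).
        unfold pw. replace (-2 * ln x) with (- (ln x + ln x)) by ring.
        rewrite exp_Ropp, exp_plus, exp_ln; auto. field; lra. }
      replace (al * (ln v - ln u) - be * (/ v - / u)) with (minus (al * ln v - be * / v) (al * ln u - be * / u))
        by (unfold minus, plus, opp; simpl; ring).
      apply (is_RInt_derive (fun x => al * ln x - be * / x)).
      * intros x Hx. specialize (Hm x Hx). auto_derive. lra. field; lra.
      * intros x Hx. specialize (Hm x Hx). apply (ex_derive_continuous (V:=R_NormedModule)). auto_derive. repeat split; nra.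
    + assert (t + 2 <> 0) by lra. assert (t + 1 <> 0) by lra.
      replace (al * (pw v (t+2) - pw u (t+2)) / (t+2) + be * (pw v (t+1) - pw u (t+1)) / (t+1))
        with (minus (al * pw v (t+2) / (t+2) + be * pw v (t+1) / (t+1))
                    (al * pw u (t+2) / (t+2) + be * pw u (t+1) / (t+1)))
        by (unfold minus, plus, opp; simpl; field; auto).
      apply (is_RInt_derive (fun x => al * pw x (t+2) / (t+2) + be * pw x (t+1) / (t+1))).
      * intros x Hx. specialize (Hm x Hx). unfold pw. auto_derive. lra.
        fold (pw x (t+2)) (pw x (t+1)) (pw x t). rewrite pw_p2, pw_p1; auto. field; repeat split; lra.
      * intros x Hx. apply cont_int. auto.
Qed.

Lemma pw_split x s s0 : 0 < x ->
  pw x (s - 1) = pw x (s0 - 2) * pw x (s - s0) * x /\ pw x (s - 2) = pw x (s0 - 2) * pw x (s - s0).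
Proof. intros. split.
  - replace (s - 1) with ((s0 - 2) + (s - s0) + 1) by ring. rewrite pw_p1, pw_add; auto.
  - replace (s - 2) with ((s0 - 2) + (s - s0)) by ring. rewrite pw_add; auto. Qed.

Lemma pw_cmp_sign x c r : 0 < x -> 0 < c -> 0 <= r -> 0 <= (x - c) * (pw x r - pw c r).
Proof. intros. destruct (Rle_dec c x).
  - assert (pw c r <= pw x r) by (apply pw_le_base; lra). nra.
  - assert (pw x r <= pw c r) by (apply pw_le_base; lra). nra. Qed.

Lemma piece_cmp al be u v c s s0 : 0 < u -> u <= v ->
  (forall x, u < x < v -> 0 <= al * x + be) -> 0 < c -> s0 <= s ->
  pw c (s - s0) * (Jc al be u v (s0 - 1) - c * Jc al be u v (s0 - 2))
  <= Jc al be u v (s - 1) - c * Jc al be u v (s - 2).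
Proof.
  intros Hu Huv HW Hc Hs.
  apply (is_RInt_le
    (fun x => pw c (s - s0) * ((al * x + be) * pw x (s0 - 1) - c * ((al * x + be) * pw x (s0 - 2))))
    (fun x => (al * x + be) * pw x (s - 1) - c * ((al * x + be) * pw x (s - 2))) u v); auto.
  - exact (is_RInt_scal _ _ _ _ _ (is_RInt_minus _ _ _ _ _ _ (JcP al be u v (s0-1) Hu Huv)
       (is_RInt_scal _ _ _ c _ (JcP al be u v (s0-2) Hu Huv)))).
  - exact (is_RInt_minus _ _ _ _ _ _ (JcP al be u v (s-1) Hu Huv)
       (is_RInt_scal _ _ _ c _ (JcP al be u v (s-2) Hu Huv))).
  - intros x Hx. assert (0 < x) by lra. specialize (HW x Hx).
    destruct (pw_split x s s0 H) as [E1 E2]. destruct (pw_split x s0 s0 H) as [F1 F2].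
    rewrite E1, E2, F1, F2. replace (s0 - s0) with 0 by ring. rewrite pw_0.
    assert (0 <= (x - c) * (pw x (s - s0) - pw c (s - s0))) by (apply pw_cmp_sign; lra).
    assert (0 < pw x (s0 - 2)) by apply pw_pos.
    assert (0 <= (al * x + be) * pw x (s0 - 2) * ((x - c) * (pw x (s - s0) - pw c (s - s0)))).
    { apply Rmult_le_pos; auto. apply Rmult_le_pos; lra. }
    nra.
Qed.

Definition Im (a b t : R) : R :=
  Jc 1 (- a) a ((a + b) / 2) t + Jc (-1) b ((a + b) / 2) b t.

Lemma Im_cmp a b c s s0 : 0 < a -> a < b -> 0 < c -> s0 <= s ->
  pw c (s - s0) * (Im a b (s0 - 1) - c * Im a b (s0 - 2))
  <= Im a b (s - 1) - c * Im a b (s - 2).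
Proof.
  intros. unfold Im.
  assert (H3 := piece_cmp 1 (-a) a ((a+b)/2) c s s0 ltac:(lra) ltac:(lra) ltac:(intros; lra) H1 H2).
  assert (H4 := piece_cmp (-1) b ((a+b)/2) b c s s0 ltac:(lra) ltac:(lra) ltac:(intros; lra) H1 H2).
  lra.
Qed.

Lemma Jc_nonneg al be u v t : 0 < u -> u <= v ->
  (forall x, u < x < v -> 0 <= al * x + be) -> 0 <= Jc al be u v t.
Proof.
  intros Hu Huv HW.
  assert (H0 := is_RInt_le (fun _ => 0) (fun x => (al * x + be) * pw x t) u v
     (scal (v - u) (0:R)) (Jc al be u v t) Huv (is_RInt_const _ _ _) (JcP al be u v t Hu Huv)).
  change (scal (v - u) (0:R)) with ((v - u) * 0) in H0. rewrite Rmult_0_r in H0. apply H0.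
  intros. apply Rmult_le_pos. apply HW; auto. apply Rlt_le, pw_pos.
Qed.

Lemma J1_pos a m t : 0 < a -> a < m -> 0 < Jc 1 (- a) a m t.
Proof.
  intros Ha Ham.
  set (k := Rmin (pw a t) (pw m t)).
  assert (Hk : 0 < k) by (unfold k; apply Rmin_case; apply pw_pos).
  apply Rlt_le_trans with (k * (m - a) * (m - a) / 2).
  { apply Rmult_lt_0_compat; [|lra]. apply Rmult_lt_0_compat; [apply Rmult_lt_0_compat|]; lra. }
  apply (is_RInt_le (fun x => (k * x + (- k * a)) * pw x 0) (fun x => (1 * x + - a) * pw x t) a m); try lra.
  - replace (k * (m - a) * (m - a) / 2) with (Jc k (- k * a) a m 0).
    apply JcP; lra.
    unfold Jc. destruct (Req_EM_T 0 (-1)); [lra|]. destruct (Req_EM_T 0 (-2)); [lra|].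
    rewrite !pw_p2, !pw_p1, !pw_0 by lra. field.
  - apply JcP; lra.
  - intros x Hx. rewrite pw_0.
    assert (k <= pw x t).
    { unfold k. destruct (Rle_dec 0 t).
      - apply Rle_trans with (pw a t). apply Rmin_l. apply pw_le_base; lra.
      - apply Rle_trans with (pw m t). apply Rmin_r. apply pw_le_base_neg; lra. }
    nra.
Qed.

Lemma Im_pos a b t : 0 < a -> a < b -> 0 < Im a b t.
Proof.
  intros. unfold Im.
  assert (0 < Jc 1 (-a) a ((a+b)/2) t) by (apply J1_pos; lra).
  assert (0 <= Jc (-1) b ((a+b)/2) b t) by (apply Jc_nonneg; intros; lra).
  lra.
Qed.

Lemma Im_gen a b t : 0 < a -> a < b -> t <> -1 -> t <> -2 ->
  Im a b t = (pw a (t+2) + pw b (t+2) - 2 * pw ((a+b)/2) (t+2)) / ((t+1) * (t+2)).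
Proof.
  intros. unfold Im, Jc.
  destruct (Req_EM_T t (-1)); [lra|]. destruct (Req_EM_T t (-2)); [lra|].
  replace (t+2) with ((t+1)+1) by ring.
  rewrite !(pw_p1 _ (t+1)) by lra.
  field. lra.
Qed.

Lemma Im_m1 a b : 0 < a -> a < b ->
  Im a b (-1) = a * ln a + b * ln b - (a + b) * ln ((a+b)/2).
Proof.
  intros. unfold Im, Jc. destruct (Req_EM_T (-1) (-1)); [|lra]. field.
Qed.

Lemma Im_m2 a b : 0 < a -> a < b ->
  Im a b (-2) = 2 * ln ((a+b)/2) - ln a - ln b.
Proof.
  intros. unfold Im, Jc. destruct (Req_EM_T (-2) (-1)); [lra|]. destruct (Req_EM_T (-2) (-2)); [|lra].
  field. lra.
Qed.

Lemma pw_m1 x : 0 < x -> pw x (-1) = / x.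
Proof. intros. unfold pw. replace (-1 * ln x) with (- ln x) by ring. rewrite exp_Ropp, exp_ln; auto. Qed.

Lemma lambda_Im s a b : 0 < a -> a < b -> lambda s a b = Im a b (s - 1) / Im a b (s - 2).
Proof.
  intros Ha Hab. unfold lambda, Amean.
  assert (P1 := Im_pos a b (s-1) Ha Hab). assert (P2 := Im_pos a b (s-2) Ha Hab).
  destruct (Req_EM_T a b); [lra|].
  destruct (Req_EM_T s (-1)).
  { subst s. replace (-1-1) with (-2) by ring. replace (-1-2) with (-3) in * by ring.
    rewrite Im_m2 by lra. rewrite Im_gen in * by lra.
    replace (-3+2) with (-1) in * by ring. rewrite !pw_m1 in * by lra.
    replace ((/ a + / b - 2 * / ((a + b) / 2)) / ((-3 + 1) * -1)) with
      ((1 / (2 * a) + 1 / (2 * b) - 2 / (a + b))) by (field; lra).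
    reflexivity. }
  destruct (Req_EM_T s 0).
  { subst s. replace (0-1) with (-1) by ring. replace (0-2) with (-2) by ring.
    rewrite Im_m1, Im_m2 by lra. reflexivity. }
  destruct (Req_EM_T s 1).
  { subst s. replace (1-1) with 0 by ring. replace (1-2) with (-1) in * by ring.
    rewrite Im_m1 in * by lra. rewrite Im_gen by lra.
    rewrite !pw_p2, !pw_0 by lra. field. lra. }
  rewrite (Im_gen a b (s-1)) in * by lra. rewrite (Im_gen a b (s-2)) in * by lra.
  replace (s-1+2) with (s+1) in * by ring. replace (s-2+2) with s in * by ring.
  unfold Rpower. fold (pw a (s+1)) (pw b (s+1)) (pw ((a+b)/2) (s+1)) (pw a s) (pw b s) (pw ((a+b)/2) s).
  assert (pw a s + pw b s - 2 * pw ((a + b) / 2) s <> 0).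
  { intro Hz. rewrite Hz in P2. unfold Rdiv in P2. rewrite Rmult_0_l in P2. lra. }
  field. repeat split; lra.
Qed.

Lemma incr_deriv (f df : R -> R) a b : a <= b ->
  (forall x, a < x < b -> is_derive f x (df x)) ->
  (forall x, a <= x <= b -> ex_derive f x) ->
  (forall x, a <= x <= b -> 0 <= df x) -> f a <= f b.
Proof.
  intros Hab Hd He Hp.
  destruct (MVT_gen f a b df) as [c [Hc E]].
  - rewrite Rmin_left, Rmax_right by lra. auto.
  - rewrite Rmin_left, Rmax_right by lra. intros x Hx.
    apply continuity_pt_filterlim. apply (ex_derive_continuous f). auto.
  - rewrite Rmin_left, Rmax_right in Hc by lra.
    assert (0 <= df c) by (apply Hp; lra). nra.
Qed.

Definition sh x := (exp x - exp (-x)) / 2.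
Definition ch x := (exp x + exp (-x)) / 2.

Lemma exp_m x : exp (- x) = / exp x.
Proof. apply exp_Ropp. Qed.

Lemma ch_pos x : 0 < ch x.
Proof. unfold ch. assert (0 < exp x) by apply exp_pos. assert (0 < exp (-x)) by apply exp_pos. lra. Qed.

Lemma chsh x : ch x * ch x - sh x * sh x = 1.
Proof. unfold ch, sh. rewrite exp_m. assert (0 < exp x) by apply exp_pos. field. lra. Qed.

Lemma sh_pos x : 0 < x -> 0 < sh x.
Proof. intros. unfold sh. assert (exp (-x) < exp x) by (apply exp_increasing; lra). lra. Qed.

Lemma sh_0 : sh 0 = 0.
Proof. unfold sh. rewrite Ropp_0. lra. Qed.

Lemma cube_lemma v : 0 <= v -> v * v * v * ch v <= sh v * sh v * sh v.
Proof.
  intros Hv.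
  set (f := fun y => sh y * exp (-1/3 * ln (ch y)) - y).
  set (df := fun y => (ch y * exp (-1/3 * ln (ch y)) - 1/3 * sh y * sh y / ch y * exp (-1/3 * ln (ch y))) - 1).
  assert (Hf : f 0 <= f v).
  { apply (incr_deriv f df); auto.
    - intros x _. unfold f, df. assert (0 < ch x) by apply ch_pos. unfold sh, ch in *. auto_derive.
      lra. toR. rewrite exp_m in *. unfold Rdiv. set (E := exp (-1 * / 3 * ln ((exp x + / exp x) * / 2))). field. assert (0 < exp x) by apply exp_pos. split; nra.
    - intros x _. unfold f. assert (0 < ch x) by apply ch_pos. unfold sh, ch in *. auto_derive. lra.
    - intros x _. unfold df.
      assert (Hc := ch_pos x). assert (Hcs := chsh x).
      set (y := pw (ch x) (1/3)).
      assert (Hy : 0 < y) by apply exp_pos.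
      assert (HY : exp (-1/3 * ln (ch x)) * y = 1).
      { unfold y, pw. rewrite <- exp_plus. replace (-1/3 * ln (ch x) + 1/3 * ln (ch x)) with 0 by field. apply exp_0. }
      assert (H3 : y * y * y = ch x).
      { unfold y. rewrite <- !pw_add. replace (1/3+1/3+1/3) with 1 by field. apply pw_1; auto. }
      assert (HY' : exp (-1/3 * ln (ch x)) = / y) by (field_simplify_eq; [lra| lra]).
      rewrite HY'. rewrite <- H3 in *.
      assert (Hs : sh x * sh x = y*y*y*(y*y*y) - 1) by lra.
      replace ((y * y * y) * / y - 1 / 3 * sh x * sh x / (y * y * y) * / y - 1)
        with ((y*y*y*(y*y*y) * 2 - 3 * (y*y*(y*y)) + 1) / (3 * (y*y*(y*y)))).
      2:{ assert (E: 1/3 * sh x * sh x = 1/3 * (y*y*y*(y*y*y) - 1)) by (rewrite <- Hs; field). rewrite E. field. lra. }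
      apply Rmult_le_pos. 2: { apply Rlt_le, Rinv_0_lt_compat. nra. }
      assert (0 <= (y*y-1)*(y*y-1)*(2*(y*y)+1)). { apply Rmult_le_pos. apply (Rle_0_sqr (y*y-1)). assert (0 <= y*y) by apply (Rle_0_sqr y). lra. }
      nra. }
  unfold f in Hf. rewrite sh_0 in Hf.
  assert (Hc := ch_pos v).
  set (y := pw (ch v) (1/3)) in *.
  assert (Hy : 0 < y) by apply exp_pos.
  assert (HY : exp (-1/3 * ln (ch v)) * y = 1).
  { unfold y, pw. rewrite <- exp_plus. replace (-1/3 * ln (ch v) + 1/3 * ln (ch v)) with 0 by field. apply exp_0. }
  assert (H3 : y * y * y = ch v).
  { unfold y. rewrite <- !pw_add. replace (1/3+1/3+1/3) with 1 by field. apply pw_1; auto. }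
  assert (HY' : exp (-1/3 * ln (ch v)) = / y) by (field_simplify_eq; [lra| lra]).
  rewrite HY' in Hf. 
  assert (v * y <= sh v).
  { apply Rmult_le_reg_r with (/ y). apply Rinv_0_lt_compat; lra.
    replace (v * y * / y) with v by (field; lra). lra. }
  rewrite <- H3.
  assert (0 <= v * y) by nra.
  assert (v*y*(v*y) <= sh v * sh v) by nra.
  nra.
Qed.

Lemma ch_ge1 x : 1 <= ch x.
Proof. assert (H := chsh x). assert (Hc := ch_pos x). nra. Qed.

Lemma KL v : 0 < v -> v * v * sh v <= ln (ch v) * (sh v + v * ch v).
Proof.
  intros Hv.
  set (h := fun x => ln (ch x) - x * x * sh x / (x * ch x + sh x)).
  set (dh := fun x => sh x / ch x - ((2 * x * sh x + x * x * ch x) * (x * ch x + sh x)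
                       - x * x * sh x * (2 * ch x + x * sh x)) / ((x * ch x + sh x) * (x * ch x + sh x))).
  assert (Hmono : forall e, 0 < e <= v -> h e <= h v).
  { intros e He. apply (incr_deriv h dh); try lra.
    - intros x Hx. unfold h, dh.
      assert (0 < ch x) by apply ch_pos. assert (0 < sh x) by (apply sh_pos; lra).
      assert (0 < x * ch x + sh x) by nra.
      unfold sh, ch in *. auto_derive.
      + rewrite exp_m in *. repeat split; lra.
      + toR. rewrite exp_m in *. assert (0 < exp x) by apply exp_pos. assert (1 < exp x) by (rewrite <- exp_0; apply exp_increasing; lra). field. repeat split; nra.
    - intros x Hx. unfold h.
      assert (0 < ch x) by apply ch_pos. assert (0 < sh x) by (apply sh_pos; lra).
      assert (0 < x * ch x + sh x) by nra.
      unfold sh, ch in *. auto_derive. rewrite exp_m in *. repeat split; lra.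
    - intros x Hx. unfold dh.
      assert (Hc : 0 < ch x) by apply ch_pos. assert (Hs : 0 < sh x) by (apply sh_pos; lra).
      assert (HD : 0 < x * ch x + sh x) by nra.
      assert (Hcs := chsh x). assert (Hcube := cube_lemma x ltac:(lra)).
      replace (sh x / ch x - ((2 * x * sh x + x * x * ch x) * (x * ch x + sh x)
                       - x * x * sh x * (2 * ch x + x * sh x)) / ((x * ch x + sh x) * (x * ch x + sh x)))
        with ((sh x * sh x * sh x - x * x * x * ch x) / (ch x * ((x * ch x + sh x) * (x * ch x + sh x)))).
      + apply Rmult_le_pos. lra. apply Rlt_le, Rinv_0_lt_compat. apply Rmult_lt_0_compat; nra.
      + field_simplify_eq.
        * assert (E : ch x * ch x = sh x * sh x + 1) by lra.
          replace (ch x ^ 3) with (ch x * (ch x * ch x)) by ring. rewrite E. ring.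
        * split; lra. }
  assert (Hlow : forall e, 0 < e -> - (e * e) <= h e).
  { intros e He. unfold h.
    assert (0 < ch e) by apply ch_pos. assert (0 < sh e) by (apply sh_pos; lra).
    assert (0 <= ln (ch e)). { rewrite <- ln_1. apply ln_le. lra. apply ch_ge1. }
    assert (e * e * sh e / (e * ch e + sh e) <= e * e).
    { apply Rmult_le_reg_r with (e * ch e + sh e). nra.
      unfold Rdiv. rewrite Rmult_assoc, Rinv_l by nra. rewrite Rmult_1_r. assert (0 <= e*e*(e*ch e)) by (apply Rmult_le_pos; nra). nra. }
    lra. }
  assert (Hh : 0 <= h v).
  { destruct (Rle_dec 0 (h v)); auto.
    set (e := Rmin v (sqrt (- h v) / 2)).
    assert (Hq : 0 < sqrt (- h v)) by (apply sqrt_lt_R0; lra).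
    assert (He : 0 < e) by (unfold e; apply Rmin_case; lra).
    assert (He2 : e <= sqrt (- h v) / 2) by apply Rmin_r.
    assert (e <= v) by apply Rmin_l.
    assert (Hsq := sqrt_sqrt (- h v) ltac:(lra)).
    assert (e * e <= sqrt (- h v) / 2 * (sqrt (- h v) / 2)) by nra.
    specialize (Hmono e (conj He H)). specialize (Hlow e He). nra. }
  unfold h in Hh.
  assert (0 < ch v) by apply ch_pos. assert (0 < sh v) by (apply sh_pos; lra).
  assert (0 < v * ch v + sh v) by nra.
  assert (v * v * sh v / (v * ch v + sh v) <= ln (ch v)) by lra.
  apply Rmult_le_reg_r with (/ (v * ch v + sh v)). apply Rinv_0_lt_compat; lra.
  replace (ln (ch v) * (sh v + v * ch v) * / (v * ch v + sh v)) with (ln (ch v)) by (field; lra).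
  exact H2.
Qed.
Lemma baseB a b : 0 < a -> a < b ->
  Im a b (-1) - (b - a) / (ln b - ln a) * Im a b (-2) <= 0.
Proof.
  intros Ha Hab.
  rewrite Im_m1, Im_m2 by lra.
  assert (Hl : ln a < ln b) by (apply ln_increasing; lra).
  set (v := (ln b - ln a) / 2). set (mu := (ln a + ln b) / 2).
  assert (Hv : 0 < v) by (unfold v; lra).
  set (F := exp mu).
  assert (HF : 0 < F) by apply exp_pos.
  assert (Ea : a = F * exp (- v)).
  { unfold F. rewrite <- exp_plus. replace (mu + - v) with (ln a) by (unfold mu, v; field). rewrite exp_ln; auto. }
  assert (Eb : b = F * exp v).
  { unfold F. rewrite <- exp_plus. replace (mu + v) with (ln b) by (unfold mu, v; field). rewrite exp_ln; lra. }
  assert (Em : (a + b) / 2 = F * ch v) by (unfold ch; rewrite Ea, Eb; field).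
  assert (Hc := ch_pos v). assert (Hs := sh_pos v Hv).
  assert (Elm : ln ((a + b) / 2) = mu + ln (ch v)) by (rewrite Em; rewrite ln_mult by lra; unfold F; rewrite ln_exp; ring).
  assert (Eba : b - a = 2 * F * sh v) by (unfold sh; rewrite Ea, Eb; field).
  assert (Eab : a + b = 2 * F * ch v) by (unfold ch; rewrite Ea, Eb; field).
  assert (Ela : ln a = mu - v) by (unfold mu, v; field).
  assert (Elb : ln b = mu + v) by (unfold mu, v; field).
  rewrite Elm, Ela, Elb.
  replace (mu + v - (mu - v)) with (2 * v) by ring.
  replace (a * (mu - v) + b * (mu + v) - (a + b) * (mu + ln (ch v))) with (v * (b - a) - (a + b) * ln (ch v)) by ring.
  replace (2 * (mu + ln (ch v)) - (mu - v) - (mu + v)) with (2 * ln (ch v)) by ring.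
  rewrite Eba, Eab.
  assert (HK := KL v Hv).
  replace (v * (2 * F * sh v) - 2 * F * ch v * ln (ch v) - 2 * F * sh v / (2 * v) * (2 * ln (ch v)))
    with ((2 * F / v) * (v * v * sh v - ln (ch v) * (sh v + v * ch v))) by (field; lra).
  assert (0 < 2 * F / v) by (apply Rdiv_lt_0_compat; lra).
  nra.
Qed.

Lemma alg_A X Y Q : 0 < X -> 0 < Y -> 0 < Q -> 2 * (Q * Q) = X * X + Y * Y ->
  2 * Q * (X + Y) <= 3 * (Q * Q) + X * Y.
Proof.
  intros. set (A := 3 * (Q * Q) + X * Y). set (B := 2 * Q * (X + Y)).
  assert (0 < A) by (unfold A; nra). assert (0 < B) by (unfold B; nra).
  assert (HE : A * A - B * B = (Q * Q - X * Y) * (Q * Q - X * Y)).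
  { unfold A, B. replace (X * X) with (2 * (Q * Q) - Y * Y) by lra. ring_simplify.
    replace (Y^2) with (Y * Y) by ring. replace (X^2) with (2 * (Q * Q) - Y * Y) by (simpl; lra). ring. }
  assert (0 <= A * A - B * B) by (rewrite HE; apply (Rle_0_sqr (Q * Q - X * Y))).
  nra.
Qed.

Lemma pw_half x : 0 < x -> pw x (1/2) = sqrt x.
Proof. intros. rewrite <- Rpower_sqrt by auto. unfold pw, Rpower. f_equal. field. Qed.

Lemma pw_mhalf x : 0 < x -> pw x (-1/2) = / sqrt x.
Proof. intros. assert (pw x (-1/2) * pw x (1/2) = 1).
  { rewrite <- pw_add. replace (-1/2 + 1/2) with 0 by field. apply pw_0. }
  rewrite pw_half in H0 by auto. assert (0 < sqrt x) by (apply sqrt_lt_R0; auto).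
  apply Rmult_eq_reg_r with (sqrt x). rewrite H0. field. lra. lra. Qed.

Lemma baseA a b : 0 < a -> a < b ->
  0 <= Im a b (-1/2 - 1) - sqrt (a * b) * Im a b (-1/2 - 2).
Proof.
  intros Ha Hab.
  rewrite !Im_gen by lra.
  replace (-1/2 - 1 + 2) with (1/2) by field. replace (-1/2 - 2 + 2) with (-1/2) by field.
  assert (Hm : 0 < (a + b) / 2) by lra.
  rewrite !pw_half, !pw_mhalf by lra.
  rewrite sqrt_mult by lra.
  assert (HX := sqrt_lt_R0 a Ha). assert (HY := sqrt_lt_R0 b ltac:(lra)). assert (HQ := sqrt_lt_R0 _ Hm).
  assert (Ha2 := sqrt_sqrt a ltac:(lra)). assert (Hb2 := sqrt_sqrt b ltac:(lra)). assert (Hm2 := sqrt_sqrt ((a+b)/2) ltac:(lra)).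
  set (X := sqrt a) in *. set (Y := sqrt b) in *. set (Q := sqrt ((a + b) / 2)) in *.
  assert (HH := alg_A X Y Q HX HY HQ ltac:(lra)).
  match goal with |- 0 <= ?e => assert (EE : e = 8 / (3 * Q) * (3 * (Q * Q) + X * Y - 2 * Q * (X + Y))); [|rewrite EE] end. { clear HH. clearbody X Y Q. field. lra. }
  apply Rmult_le_pos; [|lra]. apply Rlt_le, Rdiv_lt_0_compat; lra.
Qed.

Lemma lam_minus s a b c : 0 < a -> a < b ->
  lambda s a b - c = (Im a b (s - 1) - c * Im a b (s - 2)) / Im a b (s - 2).
Proof. intros. rewrite lambda_Im by auto. assert (0 < Im a b (s-2)) by (apply Im_pos; auto). field. lra. Qed.

Lemma sign_div x y : 0 < y -> (0 <= x / y <-> 0 <= x) /\ (0 < x / y <-> 0 < x).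
Proof. intros. split; split; intros.
  - apply Rmult_le_reg_r with (/ y). apply Rinv_0_lt_compat; auto. rewrite Rmult_0_l. auto.
  - apply Rmult_le_pos; auto. apply Rlt_le, Rinv_0_lt_compat; auto.
  - apply Rmult_lt_reg_r with (/ y). apply Rinv_0_lt_compat; auto. rewrite Rmult_0_l. auto.
  - apply Rmult_lt_0_compat; auto. apply Rinv_0_lt_compat; auto. Qed.

Lemma lam_ge s a b c : 0 < a -> a < b ->
  (c <= lambda s a b <-> 0 <= Im a b (s - 1) - c * Im a b (s - 2)).
Proof. intros. assert (0 < Im a b (s-2)) by (apply Im_pos; auto).
  destruct (sign_div (Im a b (s - 1) - c * Im a b (s - 2)) _ H1) as [E _].
  rewrite <- E, <- lam_minus by auto. split; intros; lra. Qed.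

Lemma lam_gt s a b c : 0 < a -> a < b ->
  (c < lambda s a b <-> 0 < Im a b (s - 1) - c * Im a b (s - 2)).
Proof. intros. assert (0 < Im a b (s-2)) by (apply Im_pos; auto).
  destruct (sign_div (Im a b (s - 1) - c * Im a b (s - 2)) _ H1) as [_ E].
  rewrite <- E, <- lam_minus by auto. split; intros; lra. Qed.

Lemma lam_le s a b c : 0 < a -> a < b ->
  (lambda s a b <= c <-> Im a b (s - 1) - c * Im a b (s - 2) <= 0).
Proof. intros. split; intros.
  - destruct (Rle_dec (Im a b (s - 1) - c * Im a b (s - 2)) 0); auto.
    assert (c < lambda s a b) by (apply lam_gt; auto; lra). lra.
  - destruct (Rle_dec (lambda s a b) c); auto.
    assert (0 < Im a b (s - 1) - c * Im a b (s - 2)) by (apply lam_gt; auto; lra). lra. Qed.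

Lemma lam_lt s a b c : 0 < a -> a < b ->
  (lambda s a b < c <-> Im a b (s - 1) - c * Im a b (s - 2) < 0).
Proof. intros. split; intros.
  - destruct (Rlt_dec (Im a b (s - 1) - c * Im a b (s - 2)) 0); auto.
    assert (c <= lambda s a b) by (apply lam_ge; auto; lra). lra.
  - destruct (Rlt_dec (lambda s a b) c); auto.
    assert (0 <= Im a b (s - 1) - c * Im a b (s - 2)) by (apply lam_ge; auto; lra). lra. Qed.

Lemma G_le_lam_lt s a b : -1/2 <= s -> 0 < a -> a < b -> Gmean a b <= lambda s a b.
Proof.
  intros Hs Ha Hab. unfold Gmean. apply lam_ge; auto.
  assert (HG : 0 < sqrt (a * b)) by (apply sqrt_lt_R0; nra).
  assert (H := Im_cmp a b (sqrt (a * b)) s (-1/2) Ha Hab HG Hs).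
  assert (H0 := baseA a b Ha Hab).
  assert (0 < pw (sqrt (a * b)) (s - -1/2)) by apply pw_pos.
  nra.
Qed.

Lemma lam_le_L_lt s a b : s <= 0 -> 0 < a -> a < b -> lambda s a b <= Lmean a b.
Proof.
  intros Hs Ha Hab. unfold Lmean. destruct (Req_EM_T a b); [lra|].
  assert (Hl : ln a < ln b) by (apply ln_increasing; lra).
  set (L := (b - a) / (ln b - ln a)).
  assert (HL : 0 < L) by (unfold L; apply Rdiv_lt_0_compat; lra).
  apply lam_le; auto.
  assert (H := Im_cmp a b L 0 s Ha Hab HL Hs).
  assert (H0 := baseB a b Ha Hab).
  replace (0 - 1) with (-1) in H by ring. replace (0 - 2) with (-2) in H by ring.
  assert (0 < pw L (0 - s)) by apply pw_pos.
  fold L in H0. nra.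
Qed.

Lemma lambda_sym s a b : lambda s a b = lambda s b a.
Proof.
  unfold lambda, Amean. replace (b + a) with (a + b) by ring.
  destruct (Req_EM_T a b); destruct (Req_EM_T b a); try lra.
  destruct (Req_EM_T s (-1)); [f_equal; lra|].
  destruct (Req_EM_T s 0); [f_equal; lra|].
  destruct (Req_EM_T s 1). { f_equal. ring. lra. }
  f_equal. f_equal; lra.
Qed.

Lemma Lmean_sym a b : 0 < a -> 0 < b -> Lmean a b = Lmean b a.
Proof.
  intros. unfold Lmean. destruct (Req_EM_T a b); destruct (Req_EM_T b a); try lra.
  assert (ln a <> ln b). { intro E. apply n. apply ln_inv; auto. }
  field. split; lra.
Qed.

Lemma Gmean_sym a b : Gmean a b = Gmean b a.
Proof. unfold Gmean. rewrite Rmult_comm. auto. Qed.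


Lemma pw_one t : pw 1 t = 1.
Proof. unfold pw. rewrite ln_1, Rmult_0_r. apply exp_0. Qed.

Lemma exp_ge1 y : 1 + y <= exp y.
Proof. destruct (Req_dec y 0). subst. rewrite exp_0. lra. apply Rlt_le, exp_ineq1; auto. Qed.

Lemma C0 s : -1 < s < -1/2 -> exists a, 0 < a < 1 /\ lambda s a 1 < Gmean a 1.
Proof.
  intros Hs.
  set (d := - (s + 1/2)).
  assert (Hd : 0 < d < 1/2) by (unfold d; lra).
  assert (H8d : 16 < 8 / d).
  { apply Rmult_lt_reg_r with d. lra. unfold Rdiv. rewrite Rmult_assoc, Rinv_l by lra. lra. }
  assert (Hln : 0 < ln (8 / d)) by (rewrite <- ln_1; apply ln_increasing; lra).
  set (X := (ln (8 / d) + 4) / d).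
  assert (HdX : d * X = ln (8 / d) + 4) by (unfold X; field; lra).
  assert (HX : 8 < X).
  { unfold X. apply Rmult_lt_reg_r with d. lra. unfold Rdiv. rewrite Rmult_assoc, Rinv_l by lra. nra. }
  exists (exp (-2 * X)).
  assert (Ha0 : 0 < exp (-2 * X)) by apply exp_pos.
  assert (Ha1 : exp (-2 * X) < 1) by (rewrite <- exp_0; apply exp_increasing; lra).
  split; [lra|].
  set (a := exp (-2 * X)) in *.
  assert (HG : Gmean a 1 = exp (- X)).
  { unfold Gmean. rewrite Rmult_1_r. unfold a. replace (-2 * X) with (- X + - X) by ring.
    rewrite exp_plus. apply sqrt_square. apply Rlt_le, exp_pos. }
  rewrite HG.
  unfold lambda, Amean.
  destruct (Req_EM_T a 1); [lra|]. destruct (Req_EM_T s (-1)); [lra|].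
  destruct (Req_EM_T s 0); [lra|]. destruct (Req_EM_T s 1); [lra|].
  change Rpower with pw.
  rewrite !pw_one.
  assert (Hlna : ln a = -2 * X) by (unfold a; apply ln_exp).
  set (m := (a + 1) / 2) in *.
  set (P := pw a s). set (Pa := pw a (s + 1)). set (M1 := pw m (s + 1)). set (M0 := pw m s).
  assert (HM1 : M1 <= 1).
  { unfold M1. apply Rle_trans with (pw 1 (s+1)); [apply pw_le_base; unfold m; lra | rewrite pw_one; lra]. }
  assert (HM0 : M0 <= 2).
  { unfold M0. apply Rle_trans with (pw (1/2) s). apply pw_le_base_neg; unfold m; lra.
    unfold pw. rewrite <- (exp_ln 2) at 2 by lra. apply Rlt_le, exp_increasing.
    replace (1/2) with (/ 2) by field. rewrite ln_Rinv by lra.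
    assert (0 < ln 2) by (rewrite <- ln_1; apply ln_increasing; lra). nra. }
  assert (HP : 8 <= P).
  { unfold P, pw. rewrite Hlna. apply Rle_trans with (1 + (s * (-2 * X))). nra. apply exp_ge1. }
  assert (HPa : 1 - 2 * X * (s + 1) <= Pa).
  { unfold Pa, pw. rewrite Hlna. apply Rle_trans with (1 + ((s + 1) * (-2 * X))). nra. apply exp_ge1. }
  assert (Hkey : 8 * X < P * exp (- X)).
  { unfold P, pw. rewrite Hlna. rewrite <- exp_plus.
    replace (s * (-2 * X) + - X) with (d * X + d * X) by (unfold d; field).
    rewrite exp_plus. rewrite HdX. rewrite exp_plus, exp_ln by lra.
    assert (1 <= exp 4) by (assert (H4 := exp_ge1 4); lra).
    assert (H0 : ln (8 / d) + 4 < exp (ln (8 / d) + 4)) by (assert (H5 := exp_ge1 (ln (8 / d) + 4)); lra).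
    rewrite exp_plus, exp_ln in H0 by lra.
    assert (8 / d <= 8 / d * exp 4) by nra.
    assert (8 * X = 8 / d * (ln (8 / d) + 4)) by (rewrite <- HdX; field; lra).
    assert (0 < ln (8 / d) + 4) by lra.
    nra. }
  set (N0 := P + 1 - 2 * M0).
  assert (HN0 : P / 2 <= N0) by (unfold N0; lra).
  assert (HeX : 0 < exp (- X)) by apply exp_pos.
  assert (E : (s - 1) / (s + 1) * ((Pa + 1 - 2 * M1) / N0) = (1 - s) * (2 * M1 - 1 - Pa) / ((s + 1) * N0))
    by (field; lra).
  rewrite E.
  apply Rmult_lt_reg_r with ((s + 1) * N0). nra.
  unfold Rdiv. rewrite Rmult_assoc, Rinv_l by nra. rewrite Rmult_1_r.
  assert (A1 : (1 - s) * (2 * M1 - 1 - Pa) <= (1 - s) * (2 * X * (s + 1))) by (apply Rmult_le_compat_l; lra).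
  assert (A2 : (1 - s) * (2 * X * (s + 1)) < 4 * ((s + 1) * X)).
  { assert (0 < (s + 1) * X) by nra. nra. }
  assert (A3 : 4 * ((s + 1) * X) < (s + 1) * (P * exp (- X)) / 2).
  { assert (0 < s + 1) by lra. nra. }
  assert (A4 : (s + 1) * (P * exp (- X)) / 2 <= exp (- X) * ((s + 1) * N0)).
  { assert (0 < (s + 1) * exp (- X)) by nra. nra. }
  lra.
Qed.

Lemma D0 s : 0 < s < 1 -> exists a, 0 < a < 1 /\ Lmean a 1 < lambda s a 1.
Proof.
  intros Hs.
  set (q := pw (1/2) s).
  assert (Hq0 : 0 < q) by apply pw_pos.
  assert (Hq1 : q < 1).
  { unfold q, pw.
    assert (ln (1/2) < 0) by (rewrite <- ln_1; apply ln_increasing; lra).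
    assert (H0 : exp (s * ln (1/2)) < exp 0) by (apply exp_increasing; nra). rewrite exp_0 in H0. exact H0. }
  set (M := 12 / ((1 - s) * (1 - q)) + 6 / (1 - q)).
  assert (HM1 : 0 < 12 / ((1 - s) * (1 - q))) by (apply Rdiv_lt_0_compat; nra).
  assert (HM2 : 0 < 6 / (1 - q)) by (apply Rdiv_lt_0_compat; lra).
  assert (HM : 0 < M) by (unfold M; lra).
  exists (exp (- M)).
  assert (Ha0 : 0 < exp (- M)) by apply exp_pos.
  assert (Ha1 : exp (- M) < 1) by (rewrite <- exp_0; apply exp_increasing; lra).
  split; [lra|].
  set (a := exp (- M)) in *.
  assert (Hlna : ln a = - M) by (unfold a; apply ln_exp).
  assert (HaM : a * M < 1).
  { unfold a. rewrite exp_Ropp. assert (H := exp_ge1 M). assert (0 < exp M) by apply exp_pos.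
    apply Rmult_lt_reg_r with (exp M); auto. rewrite Rmult_1_l.
    replace (/ exp M * M * exp M) with M by (field; lra). lra. }
  assert (HaQ : a <= (1 - q) / 6).
  { assert (6 / (1 - q) <= M) by (unfold M; lra).
    assert (a * (6 / (1 - q)) <= 1) by nra.
    apply Rmult_le_reg_r with (6 / (1 - q)); auto.
    replace ((1 - q) / 6 * (6 / (1 - q))) with 1 by (field; lra). lra. }
  assert (HL : Lmean a 1 < 1 / M).
  { unfold Lmean. destruct (Req_EM_T a 1); [lra|]. rewrite ln_1, Hlna.
    replace (0 - - M) with M by ring. apply Rmult_lt_compat_r. apply Rinv_0_lt_compat; lra. lra. }
  assert (HMb : 1 / M <= (1 - s) * (1 - q) / 12).
  { assert (12 / ((1 - s) * (1 - q)) <= M) by (unfold M; lra).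
    assert (0 < (1 - s) * (1 - q) / 12) by (apply Rdiv_lt_0_compat; nra).
    apply Rmult_le_reg_r with M; auto.
    replace (1 / M * M) with 1 by (field; lra).
    apply Rle_trans with ((1 - s) * (1 - q) / 12 * (12 / ((1 - s) * (1 - q)))).
    right. field. split; nra. apply Rmult_le_compat_l; lra. }
  (* sign of N0 via Im *)
  assert (HIm := Im_pos a 1 (s - 2) Ha0 Ha1).
  rewrite Im_gen in HIm by lra.
  replace (s - 2 + 2) with s in HIm by ring. replace (s - 2 + 1) with (s - 1) in HIm by ring.
  rewrite pw_one in HIm.
  unfold lambda, Amean.
  destruct (Req_EM_T a 1); [lra|]. destruct (Req_EM_T s (-1)); [lra|].
  destruct (Req_EM_T s 0); [lra|]. destruct (Req_EM_T s 1); [lra|].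
  change Rpower with pw. rewrite !pw_one.
  set (m := (a + 1) / 2) in *.
  set (P := pw a s) in *. set (Pa := pw a (s + 1)). set (M1 := pw m (s + 1)). set (M0 := pw m s) in *.
  assert (HN0 : P + 1 - 2 * M0 < 0).
  { destruct (Rlt_dec (P + 1 - 2 * M0) 0); auto.
    assert (0 < (s - 1) * s * (-1)) by nra.
    assert ((P + 1 - 2 * M0) / ((s - 1) * s) <= 0).
    { replace ((P + 1 - 2 * M0) / ((s - 1) * s)) with (- ((P + 1 - 2 * M0) / ((s - 1) * s * (-1)))) by (field; nra).
      assert (0 <= (P + 1 - 2 * M0) / ((s - 1) * s * -1)) by (apply Rmult_le_pos; [lra| apply Rlt_le, Rinv_0_lt_compat; lra]).
      lra. }
    lra. }
  assert (HP : 0 < P) by apply pw_pos. assert (HPa : 0 < Pa) by apply pw_pos.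
  assert (Hm : m = (1 + a) * (1 / 2)) by (unfold m; field).
  assert (HM0 : M0 <= (1 + a) * q).
  { unfold M0. rewrite Hm, pw_mul by lra. fold q. apply Rmult_le_compat_r; [lra|].
    unfold pw. rewrite <- (exp_ln (1 + a)) at 2 by lra. 
    assert (Hl1 : 0 < ln (1 + a)) by (rewrite <- ln_1; apply ln_increasing; lra).
    apply Rlt_le, exp_increasing. nra. }
  assert (HM1e : M1 = M0 * m) by (unfold M1, M0; apply pw_p1; unfold m; lra).
  assert (HN1 : (1 - q) / 2 <= Pa + 1 - 2 * M1).
  { rewrite HM1e. assert (0 < M0) by apply pw_pos.
    assert (2 * (M0 * m) <= (1 + a) * q * (1 + a)) by (unfold m in *; nra).
    assert ((1 + a) * q * (1 + a) <= q + 3 * a) by nra.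
    lra. }
  assert (HN0b : - (P + 1 - 2 * M0) <= 3) by nra.
  set (N1 := Pa + 1 - 2 * M1) in *. set (N0 := P + 1 - 2 * M0) in *.
  assert (E : (s - 1) / (s + 1) * (N1 / N0) = (1 - s) * N1 / ((1 + s) * (- N0))) by (field; lra).
  rewrite E.
  apply Rlt_le_trans with ((1 - s) * (1 - q) / 12). lra.
  apply Rmult_le_reg_r with ((1 + s) * (- N0)). nra.
  unfold Rdiv at 2. rewrite Rmult_assoc, Rinv_l by nra. rewrite Rmult_1_r.
  assert (A1 : (1 - s) * ((1 - q) / 2) <= (1 - s) * N1) by (apply Rmult_le_compat_l; lra).
  assert (A2 : (1 + s) * (- N0) <= 6) by nra.
  assert (A3 : 0 <= (1 - s) * (1 - q) / 12) by (apply Rmult_le_pos; [nra|lra]).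
  assert (A4 : (1 - s) * (1 - q) / 12 * ((1 + s) * - N0) <= (1 - s) * (1 - q) / 12 * 6) by (apply Rmult_le_compat_l; lra).
  lra.
Qed.

Lemma lam_aa s a : lambda s a a = a.
Proof. unfold lambda. destruct (Req_EM_T a a); [auto|lra]. Qed.

Lemma G_aa a : 0 < a -> Gmean a a = a.
Proof. intros. unfold Gmean. apply sqrt_square. lra. Qed.

Lemma L_aa a : Lmean a a = a.
Proof. unfold Lmean. destruct (Req_EM_T a a); [auto|lra]. Qed.

Lemma G_le_lam_all s : -1/2 <= s -> forall a b, 0 < a -> 0 < b -> Gmean a b <= lambda s a b.
Proof.
  intros Hs a b Ha Hb. destruct (Rtotal_order a b) as [H|[H|H]].
  - apply G_le_lam_lt; auto.
  - subst. rewrite lam_aa, G_aa; lra.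
  - rewrite lambda_sym, Gmean_sym. apply G_le_lam_lt; auto.
Qed.

Lemma lam_le_L_all s : s <= 0 -> forall a b, 0 < a -> 0 < b -> lambda s a b <= Lmean a b.
Proof.
  intros Hs a b Ha Hb. destruct (Rtotal_order a b) as [H|[H|H]].
  - apply lam_le_L_lt; auto.
  - subst. rewrite lam_aa, L_aa; lra.
  - rewrite lambda_sym, Lmean_sym by auto. apply lam_le_L_lt; auto.
Qed.

Theorem theorem3 :
  (forall s : R, -1/2 <= s <= 0 ->
     forall a b : R, 0 < a -> 0 < b ->
       Gmean a b <= lambda s a b /\ lambda s a b <= Lmean a b)
  /\
  (forall s : R,
     (forall a b : R, 0 < a -> 0 < b -> Gmean a b <= lambda s a b) <-> -1/2 <= s)
  /\
  (forall s : R,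
     (forall a b : R, 0 < a -> 0 < b -> lambda s a b <= Lmean a b) <-> s <= 0).
Proof.
  split; [|split].
  - intros s Hs a b Ha Hb. split.
    + apply G_le_lam_all; lra.
    + apply lam_le_L_all; lra.
  - intros s. split; [|intros; apply G_le_lam_all; auto].
    intros Hall. destruct (Rle_dec (-1/2) s) as [|Hn]; auto. exfalso.
    set (s0 := Rmax s (-3/4)).
    assert (Hs0 : -1 < s0 < -1/2 /\ s <= s0).
    { unfold s0. apply Rmax_case_strong; intros; lra. }
    destruct (C0 s0 (proj1 Hs0)) as [a [Ha H]].
    assert (HG : 0 < Gmean a 1) by (unfold Gmean; apply sqrt_lt_R0; lra).
    apply lam_lt in H; try lra.
    assert (Hc := Im_cmp a 1 (Gmean a 1) s0 s ltac:(lra) ltac:(lra) HG (proj2 Hs0)).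
    assert (0 < pw (Gmean a 1) (s0 - s)) by apply pw_pos.
    assert (Im a 1 (s - 1) - Gmean a 1 * Im a 1 (s - 2) < 0) by nra.
    assert (lambda s a 1 < Gmean a 1) by (apply lam_lt; lra).
    specialize (Hall a 1 ltac:(lra) ltac:(lra)). lra.
  - intros s. split; [|intros; apply lam_le_L_all; auto].
    intros Hall. destruct (Rle_dec s 0) as [|Hn]; auto. exfalso.
    set (s0 := Rmin s (1/2)).
    assert (Hs0 : 0 < s0 < 1 /\ s0 <= s).
    { unfold s0. apply Rmin_case_strong; intros; lra. }
    destruct (D0 s0 (proj1 Hs0)) as [a [Ha H]].
    assert (HL : 0 < Lmean a 1).
    { unfold Lmean. destruct (Req_EM_T a 1); [lra|]. rewrite ln_1.
      assert (ln a < 0) by (rewrite <- ln_1; apply ln_increasing; lra).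
      apply Rdiv_lt_0_compat; lra. }
    apply lam_gt in H; try lra.
    assert (Hc := Im_cmp a 1 (Lmean a 1) s s0 ltac:(lra) ltac:(lra) HL (proj2 Hs0)).
    assert (0 < pw (Lmean a 1) (s - s0)) by apply pw_pos.
    assert (0 < Im a 1 (s - 1) - Lmean a 1 * Im a 1 (s - 2)) by nra.
    assert (Lmean a 1 < lambda s a 1) by (apply lam_gt; lra).
    specialize (Hall a 1 ltac:(lra) ltac:(lra)). lra.
Qed.
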